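(* Let $\mathbb{T}\in\mathrm{Tr}(2\times\mathbb{N})$. The system $\{z_\eta:\eta\in 2^{<\mathbb{N}}\setminus\{\emptyset\}\}$ is a $1$-unconditional shrinking basis of $E_{\mathbb{T}}$.
   Context: Trees: a tree on $\Lambda$ is a subset of $\Lambda^{<\mathbb{N}}$ closed under initial segments; $[T]$ denotes its infinite branches; elements of a tree on $2\times\mathbb{N}$ are pairs $(\sigma,\nu)$ of sequences of equal length; for $\sigma\in2^{\mathbb{N}}$, $\mathbb{T}(\sigma)=\{\nu\in\mathbb{N}^{<\mathbb{N}}:(\sigma|_{|\nu|},\nu)\in\mathbb{T}\}$. For $\nu=(n_1,\dots,n_k)$ (or infinite) let $\tilde\nu=\{n_1,n_1+n_2,\dots\}$, and for $T\in\mathrm{Tr}(\mathbb{N})$ let $\mathcal{M}_T=\{\tilde\nu:\nu\in T\cup[T]\text{ or }|\nu|\le3\}$. For a compact family $\mathcal{M}$ of subsets of $\mathbb{N}$, $\|\cdot\|_{\mathcal{M}}$ is the norm on $c_{00}$ given as the Minkowski gauge of the smallest absolutely convex $\Theta_{\mathcal{M}}\subset c_{00}$ containing all $e_i=\mathbf{1}_{\{i\}}$ and such that $\frac12\sum_k\mathbf{1}_{E_k}x_k\in\Theta_{\mathcal{M}}$ whenever $x_k\in\Theta_{\mathcal{M}}$ and $E_1<\dots<E_n$ are finite sets for which some element of $\mathcal{M}$ contains $m_1,\dots,m_n$ with $m_1\le E_1<m_2\le E_2<\dots<m_n\le E_n$. $E_{\mathbb{T}}$ is the completion of $c_{00}(2^{<\mathbb{N}}\setminus\{\emptyset\})$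 under $\|x\|_{\mathbb{T}}=\sup_{\sigma\in2^{\mathbb{N}}}\|\sum_{\ell\ge1}x(\sigma|_\ell)e_\ell\|_{\mathcal{M}_{\mathbb{T}(\sigma)}}$, and $z_\eta=\mathbf{1}_{\{\eta\}}$. A basis is $1$-unconditional if $\|\sum_{A}a_ix_i\|\le\|\sum_Ba_ix_i\|$ for finite $A\subset B$; shrinking if the dual functionals span a dense subspace of the dual. *)

(* Defs.v *)
From HB Require Import structures.
From mathcomp Require Import all_boot all_order all_algebra.
From mathcomp Require Import boolp classical_sets reals.
Set Implicit Arguments. Unset Strict Implicit. Unset Printing Implicit Defensive.
Import Order.TTheory GRing.Theory Num.Theory.
Local Open Scope classical_set_scope.
Local Open Scope ring_scope.

(* Convention: N = {1,2,3,...} is encoded by positive nats. *)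

Definition is_tree2N (T : set (seq bool * seq nat)) : Prop :=
  (forall s n, T (s, n) -> size s = size n) /\
  (forall s n k, T (s, n) -> T (take k s, take k n)) /\
  (forall s n, T (s, n) -> all (fun k => 0 < k)%N n).

Definition restr (sigma : nat -> bool) (l : nat) : seq bool := mkseq sigma l.

Definition Tsec (T : set (seq bool * seq nat)) (sigma : nat -> bool)
  : set (seq nat) := fun nu => T (restr sigma (size nu), nu).

Definition tilde (nu : seq nat) : set nat :=
  fun m => exists k, (0 < k <= size nu)%N /\ m = (\sum_(i < k) nth 0%N nu i)%N.

Definition tilde_inf (nu : nat -> nat) : set nat :=
  fun m => exists k, (0 < k)%N /\ m = (\sum_(i < k) nu i)%N.

Definition MT (S : set (seq nat)) : set (set nat) :=
  fun F =>
    (exists nu : seq nat,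
        (S nu \/ ((size nu <= 3)%N /\ all (fun k => 0 < k)%N nu)) /\ F = tilde nu)
    \/ (exists nu : nat -> nat, (forall k, S (mkseq nu k)) /\ F = tilde_inf nu).

Definition admissible (M : set (set nat)) (n : nat) (E : nat -> seq nat) : Prop :=
  exists F, M F /\ exists m : nat -> nat,
    (forall k, (k < n)%N -> F (m k)) /\
    (forall k, (k < n)%N -> E k != [::]) /\
    (forall k i, (k < n)%N -> i \in E k -> (m k <= i)%N) /\
    (forall k i, (k.+1 < n)%N -> i \in E k -> (i < m k.+1)%N).

Section Norms.
Variable R : realType.

Definition e (i : nat) : nat -> R := fun j => if j == i then 1 else 0.

Definition theta_closed (M : set (set nat)) (S : set (nat -> R)) : Prop :=
  (forall i, (0 < i)%N -> S (e i)) /\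
  (forall x y (a b : R), S x -> S y -> `|a| + `|b| <= 1 ->
      S (fun i => a * x i + b * y i)) /\
  (forall (n : nat) (x : nat -> nat -> R) (E : nat -> seq nat),
      (forall k, (k < n)%N -> S (x k)) -> admissible M n E ->
      S (fun i => 2^-1 * \sum_(k < n) (if i \in E k then x k i else 0))).

Definition Theta (M : set (set nat)) : set (nat -> R) :=
  fun x => forall S, theta_closed M S -> S x.

Definition normM (M : set (set nat)) (x : nat -> R) : R :=
  inf [set t : R | 0 < t /\ Theta M (fun i => t^-1 * x i)].

Definition normT (T : set (seq bool * seq nat)) (x : seq bool -> R) : R :=
  sup [set r : R | exists sigma : nat -> bool,
         r = normM (MT (Tsec T sigma))
               (fun l => if l == 0%N then 0 else x (restr sigma l))].

Definition c00T (x : seq bool -> R) : Prop :=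
  x [::] = 0 /\ exists s : seq (seq bool), forall eta, eta \notin s -> x eta = 0.

Definition z (eta : seq bool) : seq bool -> R :=
  fun xi => if xi == eta then 1 else 0.

Definition lincomb (A : seq (seq bool)) (a : seq bool -> R) : seq bool -> R :=
  fun xi => if xi \in A then a xi else 0.

Definition linear_c00 (f : (seq bool -> R) -> R) : Prop :=
  forall x y (a b : R), c00T x -> c00T y ->
    f (fun eta => a * x eta + b * y eta) = a * f x + b * f y.

(* bounded linear functionals on (c00, ||.||_T) = elements of E_T^*;
   shrinking: the biorthogonal functionals z*_eta (x |-> x(eta)) span a
   norm-dense subspace of E_T^* *)
Definition shrinkingT (T : set (seq bool * seq nat)) : Prop :=
  forall f : (seq bool -> R) -> R, linear_c00 f ->
    (exists C : R, forall x, c00T x -> `|f x| <= C * normT T x) ->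
    forall eps : R, 0 < eps ->
      exists (F : seq (seq bool)) (c : seq bool -> R),
        [::] \notin F /\
        forall x, c00T x ->
          `|f x - \sum_(eta <- F) c eta * x eta| <= eps * normT T x.

End Norms.

(* Main.v *)
Require Import Defs.
From HB Require Import structures.
From mathcomp Require Import all_boot all_order all_algebra.
From mathcomp Require Import boolp classical_sets reals.
From mathcomp Require Import ring lra zify.
Unset Printing Implicit Defensive.
Import Order.TTheory GRing.Theory Num.Theory.
Local Open Scope classical_set_scope.
Local Open Scope ring_scope.

Lemma Theta_e {R : realType} M i : (0 < i)%N -> Theta M (e R i).
Proof. by move=> Hi S [H1 _]; apply: H1. Qed.

Lemma Theta_comb {R : realType} M (x y : nat -> R) a b :
  Theta M x -> Theta M y -> `|a| + `|b| <= 1 -> Theta M (fun i => a * x i + b * y i).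
Proof. by move=> Hx Hy Hab S HS; case: (HS) => _ [H2 _]; apply: H2 => //; [apply: Hx|apply: Hy]. Qed.

Lemma Theta_adm {R : realType} M n (x : nat -> nat -> R) E :
  (forall k, (k < n)%N -> Theta M (x k)) -> admissible M n E ->
  Theta M (fun i => 2^-1 * \sum_(k < n) (if i \in E k then x k i else 0)).
Proof. move=> Hx HE S HS; case: (HS) => _ [_ H3]; apply: H3 => // k Hk; exact: Hx. Qed.

Lemma Theta_ext {R : realType} M (x y : nat -> R) : Theta M x -> (forall i, x i = y i) -> Theta M y.
Proof. by move=> H E; have -> : y = x by apply: funext => i; rewrite E. Qed.

Lemma Theta_scale {R : realType} M (x y : nat -> R) c :
  Theta M x -> `|c| <= 1 -> (forall i, y i = c * x i) -> Theta M y.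
Proof.
move=> Hx Hc E; apply: (Theta_ext _ _ _ (Theta_comb _ _ _ c 0 Hx Hx _)).
  by rewrite normr0 addr0.
by move=> i /=; rewrite E mul0r addr0.
Qed.

Lemma Theta0 {R : realType} M : Theta M (fun _ => 0 : R).
Proof.
have H1 : Theta M (e R 1) by apply: Theta_e.
apply: (Theta_scale _ _ _ 0 H1); first by rewrite normr0.
by move=> i; rewrite mul0r.
Qed.

Definition mask {R : realType} (D : nat -> bool) (x : nat -> R) : nat -> R :=
  fun i => if D i then x i else 0.

Lemma Theta_mask {R : realType} M (x : nat -> R) D : Theta M x -> Theta M (mask D x).
Proof.
move=> Hx; pose S := fun x : nat -> R => forall D, Theta M (mask D x).
suff : S x by apply.
apply: Hx; split; [|split].
- move=> i Hi D0; rewrite /mask.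
  case: (boolP (D0 i)) => HD.
  + eapply Theta_ext; first exact: (Theta_e M _ Hi).
    move=> j /=; rewrite /e; case: eqP => [->|_]; by rewrite ?HD ?if_same.
  + eapply Theta_ext; first exact: (Theta0 M).
    move=> j /=; rewrite /e; case: eqP => [->|_]; by rewrite ?(negbTE HD) ?if_same.
- move=> x0 y0 a b Hx0 Hy0 Hab D0.
  eapply Theta_ext; first exact: (Theta_comb _ _ _ _ _ (Hx0 D0) (Hy0 D0) Hab).
  move=> j /=; rewrite /mask.
  by case: (D0 j) => //; rewrite !mulr0 addr0.
- move=> n x0 E Hx0 HE D0.
  eapply Theta_ext; first exact: (Theta_adm M n (fun k => mask D0 (x0 k)) E (fun k Hk => Hx0 k Hk D0) HE).
  move=> j /=; rewrite /mask; case: (D0 j) => //.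
  by rewrite big1 ?mulr0 // => k _; rewrite if_same.
Qed.

Lemma adm_disj M n E j k i : admissible M n E -> (j < k < n)%N ->
  i \in E j -> i \in E k -> False.
Proof.
move=> [F [_ [m [_ [Hne [Hlo Hhi]]]]]] /andP [Hjk Hkn] Hj Hk.
suff H : forall d, (j + d.+1 < n)%N -> (i < m (j + d.+1))%N.
  have := H (k - j.+1)%N; rewrite (_ : (j + (k - j.+1).+1 = k)%N); last by lia.
  by move=> /(_ Hkn) Hlt; have := Hlo _ _ Hkn Hk; lia.
elim=> [|d IH] Hd.
  by rewrite addn1; apply: Hhi => //; rewrite -addn1.
have Hd' : (j + d.+1 < n)%N by lia.
have := Hne _ Hd'; case Heq: (E (j + d.+1)%N) => [|a l] // _.
have Ha : a \in E (j + d.+1)%N by rewrite Heq inE eqxx.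
have := Hlo _ _ Hd' Ha; have := Hhi _ _ (_ : ((j + d.+1).+1 < n)%N) Ha.
rewrite (_ : (j + d.+2 = (j + d.+1).+1)%N) in Hd *; last by lia.
move=> /(_ Hd) H1 H2; have := IH Hd'; lia.
Qed.

Lemma Theta_bounded {R : realType} M (x : nat -> R) : Theta M x -> forall i, `|x i| <= 1.
Proof.
move=> Hx; pose S := fun x : nat -> R => forall i, `|x i| <= 1.
apply: (Hx S); split; [|split].
- move=> i Hi j; rewrite /e; case: eqP => _; by rewrite ?normr1 ?normr0.
- move=> x0 y0 a b Hx0 Hy0 Hab j.
  apply: (le_trans (ler_normD _ _)); rewrite !normrM.
  apply: le_trans Hab; apply: lerD; rewrite -[leRHS]mulr1; apply: ler_wpM2l => //.
- move=> n x0 E Hx0 HE i.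
  rewrite normrM.
  have H2 : `|(2 : R)^-1| <= 1 by rewrite ger0_norm ?invr_ge0 // invf_le1 //; lra.
  rewrite -[leRHS]mul1r; apply: ler_pM => //.
  case: (pselect (exists k, (k < n)%N /\ i \in E k)) => [[k0 [Hk0 Hi0]]|Hno].
  + rewrite (bigD1 (Ordinal Hk0)) //= Hi0 big1 ?addr0; first exact: Hx0.
    move=> k Hk; case: ifP => // Hik; exfalso.
    have Hne : (nat_of_ord k != k0) by apply: contra Hk => /eqP Hkk; apply/eqP; apply: val_inj.
    case: (ltngtP k k0) => Hc.
    * by apply: (adm_disj M n E k k0 i HE) => //; rewrite Hc Hk0.
    * by apply: (adm_disj M n E k0 k i HE) => //; rewrite Hc ltn_ord.
    * by rewrite Hc eqxx in Hne.
  + rewrite big1 ?normr0 // => k _; case: ifP => // Hik; exfalso; apply: Hno.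
    by exists k; split.
Qed.

Lemma term_le_sum {R : realType} N (f : nat -> R) l : (l < N)%N ->
  (forall k, 0 <= f k) -> f l <= \sum_(k < N) f k.
Proof.
move=> Hl H0; rewrite (bigD1 (Ordinal Hl)) //= -[leLHS]addr0; apply: lerD => //.
by apply: sumr_ge0.
Qed.

Lemma Theta_fin {R : realType} M N (v : nat -> R) :
  (forall l, (l == 0)%N || (N < l)%N -> v l = 0) ->
  \sum_(l < N) `|v l.+1| <= 1 -> Theta M v.
Proof.
elim: N v => [|N IH] v Hsupp Hsum.
  eapply Theta_ext; first exact: Theta0.
  by move=> l /=; rewrite Hsupp //; case: l.
rewrite big_ord_recr /= in Hsum.
set s := \sum_(l < N) _ in Hsum.
set b := v N.+1.
have Hs0 : 0 <= s by apply: sumr_ge0.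
pose v' := fun l => if (l <= N)%N then v l else 0.
have Hv : forall l, v l = v' l + b * e R N.+1 l.
  move=> l; rewrite /v' /e /b; case: eqP => [->|Hne]; first by rewrite ltnn mulr1 add0r.
  rewrite mulr0 addr0; case: leqP => // Hl; rewrite Hsupp //; apply/orP; right.
  by move: Hne Hl; clear; lia.
have HeN : Theta M (e R N.+1) by apply: Theta_e.
have Hb : `|b| <= 1 by move: Hsum; lra.
case: (eqVneq s 0) => Hs.
- have Hv0 : forall l, v' l = 0.
    move=> l; rewrite /v'; case: leqP => // Hl.
    case: l Hl => [|l] Hl; first by rewrite Hsupp.
    apply/normr0_eq0/le_anti; rewrite normr_ge0 andbT -Hs.
    by apply: (term_le_sum N (fun k => `|v k.+1|) l).
  apply: (Theta_scale M _ _ b HeN Hb) => l; by rewrite Hv Hv0 add0r.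
- have Hsp : 0 < s by rewrite lt_neqAle eq_sym Hs Hs0.
  have Hu : Theta M (fun l => s^-1 * v' l).
    apply: IH.
      move=> l /orP [/eqP ->|Hl]; rewrite /v'; first by rewrite Hsupp ?mulr0.
      by rewrite leqNgt Hl mulr0.
    rewrite (eq_bigr (fun l : 'I_N => s^-1 * `|v l.+1|)).
      by rewrite -mulr_sumr mulVf.
    move=> l _ /=; rewrite normrM ger0_norm ?invr_ge0 ?(ltW Hsp) // /v' ltn_ord //.
  have Hsb : `|s| + `|b| <= 1 by rewrite ger0_norm.
  eapply Theta_ext; first exact: (Theta_comb M _ _ s b Hu HeN Hsb).
  by move=> l /=; rewrite Hv mulrA mulfV // mul1r.
Qed.

Definition nset {R : realType} M (v : nat -> R) := [set t : R | 0 < t /\ Theta M (fun i => t^-1 * v i)].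

Lemma nset_lb {R : realType} M (v : nat -> R) : lbound (nset M v) 0.
Proof. by move=> t [Ht _]; apply: ltW. Qed.

Lemma normM_ge0 {R : realType} M (v : nat -> R) : 0 <= normM M v.
Proof.
rewrite /normM -/(nset M v).
case: (pselect (nset M v !=set0)) => H.
  by apply: lb_le_inf => //; apply: nset_lb.
by rewrite inf_out // => -[].
Qed.

Lemma normM_le {R : realType} M (v : nat -> R) t : 0 < t -> Theta M (fun i => t^-1 * v i) ->
  normM M v <= t.
Proof.
move=> Ht HT; rewrite /normM -/(nset M v).
apply: ge_inf; last by split.
by exists 0; apply: nset_lb.
Qed.

Lemma normM_lt {R : realType} M (v : nat -> R) t : nset M v !=set0 -> normM M v < t ->
  Theta M (fun i => t^-1 * v i).
Proof.
move=> Hne; rewrite /normM -/(nset M v) => /(inf_lt Hne) [s [Hs HT] Hst].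
have Ht : 0 < t by apply: lt_trans Hst.
apply: (Theta_scale M _ _ (s / t) HT).
  by rewrite ger0_norm ?divr_ge0 ?ltW // ltr_pdivrMr // mul1r.
have Hs0 : s != 0 by rewrite gt_eqF.
have Ht0 : t != 0 by rewrite gt_eqF.
by move=> i; field; rewrite Hs0 Ht0.
Qed.

Lemma normM_fin {R : realType} M (v : nat -> R) N K :
  (forall l, (l == 0)%N || (N < l)%N -> v l = 0) -> (forall l, `|v l| <= K) -> 0 <= K ->
  nset M v !=set0 /\ normM M v <= 1 + K *+ N.
Proof.
move=> Hs Hb HK.
have Ht : 0 < 1 + K *+ N by rewrite ltr_pwDl // mulrn_wge0.
suff HT : Theta M (fun i => (1 + K *+ N)^-1 * v i).
  by split; [exists (1 + K *+ N)|apply: normM_le].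
apply: Theta_fin (N) _ _ _.
  by move=> l Hl; rewrite Hs ?mulr0.
rewrite (eq_bigr (fun l : 'I_N => (1 + K *+ N)^-1 * `|v l.+1|)); last first.
  by move=> l _; rewrite normrM ger0_norm // invr_ge0 ltW.
rewrite -mulr_sumr ler_pdivrMl // mulr1.
apply: (le_trans (y := \sum_(l < N) K)); first by apply: ler_sum => l _.
by rewrite sumr_const card_ord lerDr.
Qed.

Definition vT {R : realType} (x : seq bool -> R) (sigma : nat -> bool) : nat -> R :=
  fun l => if l == 0%N then 0 else x (restr sigma l).

Definition nTset {R : realType} T (x : seq bool -> R) : set R :=
  [set r : R | exists sigma : nat -> bool, r = normM (MT (Tsec T sigma)) (vT x sigma)].

Definition finsupp {R : realType} (x : seq bool -> R) :=
  exists s : seq (seq bool), forall eta, eta \notin s -> x eta = 0.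

Lemma le_sum_mem {R : realType} (x : seq bool -> R) s eta : eta \in s ->
  `|x eta| <= \sum_(xi <- s) `|x xi|.
Proof.
elim: s => // a s IH; rewrite inE big_cons => /orP [/eqP ->|H].
  by rewrite lerDl sumr_ge0.
by apply: le_trans (IH H) _; rewrite lerDr.
Qed.

Lemma le_size_mem (s : seq (seq bool)) (eta : seq bool) : eta \in s ->
  (size eta <= foldr maxn 0 (map size s))%N.
Proof.
elim: s => // a s IH; rewrite inE /= => /orP [/eqP ->|H]; first by apply: leq_maxl.
by apply: leq_trans (IH H) _; apply: leq_maxr.
Qed.

Lemma size_restr sigma l : size (restr sigma l) = l.
Proof. by rewrite /restr size_mkseq. Qed.

Lemma vT_fin {R : realType} (x : seq bool -> R) : finsupp x ->
  exists B, forall M sigma, nset M (vT x sigma) !=set0 /\ normM M (vT x sigma) <= B.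
Proof.
move=> [s Hs].
set N := foldr maxn 0 (map size s).
set K := \sum_(xi <- s) `|x xi|.
exists (1 + K *+ N) => M sigma; apply: normM_fin.
- move=> l /orP [/eqP ->|Hl]; rewrite /vT ?eqxx //.
  case: eqP => // _; apply: Hs; apply/negP => Hin.
  by have := le_size_mem _ _ Hin; rewrite size_restr -/N leqNgt Hl.
- move=> l; rewrite /vT; case: eqP => _; first by rewrite normr0 sumr_ge0.
  case: (boolP (restr sigma l \in s)) => H; first by apply: le_sum_mem.
  by rewrite Hs // normr0 sumr_ge0.
- by rewrite sumr_ge0.
Qed.

Lemma normT_E {R : realType} T (x : seq bool -> R) : normT T x = sup (nTset T x).
Proof. by []. Qed.

Lemma normT_ub {R : realType} T (x : seq bool -> R) sigma : finsupp x ->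
  normM (MT (Tsec T sigma)) (vT x sigma) <= normT T x.
Proof.
move=> /vT_fin [B HB]; rewrite normT_E; apply: ub_le_sup; last by exists sigma.
by exists B => r [s ->]; case: (HB (MT (Tsec T s)) s).
Qed.

Lemma normT_le {R : realType} T (x : seq bool -> R) B :
  (forall sigma, normM (MT (Tsec T sigma)) (vT x sigma) <= B) -> normT T x <= B.
Proof.
move=> H; rewrite normT_E; apply: ge_sup.
  by exists (normM (MT (Tsec T (fun _ => false))) (vT x (fun _ => false))), (fun _ => false).
by move=> r [s ->].
Qed.

Lemma normT_ge0 {R : realType} T (x : seq bool -> R) : finsupp x -> 0 <= normT T x.
Proof. move=> Hx; exact: le_trans (normM_ge0 _ _) (normT_ub T x (fun _ => false) Hx). Qed.

Lemma normM_mask {R : realType} M (v : nat -> R) D : nset M v !=set0 ->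
  normM M (mask D v) <= normM M v.
Proof.
move=> Hne; rewrite [X in _ <= X]/normM -/(nset M v); apply: lb_le_inf => // t [Ht HT].
apply: normM_le => //.
eapply Theta_ext; first exact: (Theta_mask M _ D HT).
by move=> i; rewrite /mask; case: (D i); rewrite ?mulr0.
Qed.

Lemma normT_mask {R : realType} T (x : seq bool -> R) (P : seq bool -> bool) : finsupp x ->
  normT T (fun eta => if P eta then x eta else 0) <= normT T x.
Proof.
move=> Hx; apply: normT_le => sigma.
have -> : vT (fun eta => if P eta then x eta else 0) sigma =
          mask (fun l => P (restr sigma l)) (vT x sigma).
  by apply: funext => l; rewrite /vT /mask; case: eqP => _; rewrite ?if_same.
apply: le_trans (normT_ub T x sigma Hx).
apply: normM_mask; have [B HB] := vT_fin x Hx; by case: (HB (MT (Tsec T sigma)) sigma).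
Qed.

Lemma part2 {R : realType} T (A B : seq (seq bool)) (a : seq bool -> R) :
  {subset A <= B} -> normT T (lincomb A a) <= normT T (lincomb B a).
Proof.
move=> HAB.
have -> : lincomb A a = (fun eta => if eta \in A then lincomb B a eta else 0).
  apply: funext => eta; rewrite /lincomb; case: (boolP (eta \in A)) => // H.
  by rewrite (HAB _ H).
apply: normT_mask; exists B => eta H; by rewrite /lincomb (negbTE H).
Qed.

Lemma part1 {R : realType} T (eta : seq bool) : eta != [::] -> 0 < normT T (z R eta).
Proof.
move=> Hne.
pose sigma := fun i => nth false eta i.
have Hz : finsupp (z R eta) by exists [:: eta] => xi; rewrite inE /z => /negbTE ->.
apply: lt_le_trans (normT_ub T _ sigma Hz).
have Hs : (0 < size eta)%N by case: eta Hne {sigma Hz}.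
have -> : vT (z R eta) sigma = e R (size eta).
  apply: funext => l; rewrite /vT /e /z; case: eqP => [->|Hl].
    by rewrite eq_sym (negbTE (lt0n_neq0 Hs)).
  case: (eqVneq l (size eta)) => [->|Hn].
    by rewrite /restr /sigma mkseq_nth !eqxx.
  case: (eqVneq (restr sigma l) eta) => // /(congr1 size); rewrite size_restr => Hl'.
  by rewrite Hl' eqxx in Hn.
apply: (@lt_le_trans _ _ 1) => //.
rewrite /normM; apply: lb_le_inf.
  exists 1; split => //; eapply Theta_ext; first exact: (Theta_e _ _ Hs).
  by move=> i; rewrite invr1 mul1r.
move=> t [Ht HT]; have := Theta_bounded _ _ HT (size eta).
rewrite /e eqxx mulr1 ger0_norm ?invr_ge0 ?(ltW Ht) // invf_le1 //.
Qed.

Lemma in_blk {R : realType} (x : seq bool -> R) a b sigma c i :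
  (forall eta, x eta != 0 -> (a <= size eta <= b)%N) ->
  (if i \in iota a (b - a).+1 then c * vT x sigma i else 0) = c * vT x sigma i.
Proof.
move=> Hx; case: ifP => // Hi; rewrite /vT; case: eqP => _; first by rewrite mulr0.
case: (eqVneq (x (restr sigma i)) 0) => [->|H]; first by rewrite mulr0.
have := Hx _ H; rewrite size_restr; move: Hi; rewrite mem_iota => /negbT; lia.
Qed.

Lemma vT_add {R : realType} (x1 x2 x3 : seq bool -> R) sigma i :
  vT (fun eta => x1 eta + x2 eta + x3 eta) sigma i = vT x1 sigma i + vT x2 sigma i + vT x3 sigma i.
Proof. by rewrite /vT; case: eqP => _; rewrite ?addr0. Qed.

Lemma three_blocks {R : realType} T (x1 x2 x3 : seq bool -> R) a1 b1 a2 b2 a3 b3 B :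
  finsupp x1 -> finsupp x2 -> finsupp x3 ->
  (0 < a1)%N -> (a1 <= b1)%N -> (b1 < a2)%N -> (a2 <= b2)%N -> (b2 < a3)%N -> (a3 <= b3)%N ->
  (forall eta, x1 eta != 0 -> (a1 <= size eta <= b1)%N) ->
  (forall eta, x2 eta != 0 -> (a2 <= size eta <= b2)%N) ->
  (forall eta, x3 eta != 0 -> (a3 <= size eta <= b3)%N) ->
  normT T x1 <= B -> normT T x2 <= B -> normT T x3 <= B ->
  normT T (fun eta => x1 eta + x2 eta + x3 eta) <= 2 * B.
Proof.
move=> F1 F2 F3 H1 H2 H3 H4 H5 H6 S1 S2 S3 N1 N2 N3.
apply: normT_le => sigma.
set M := MT (Tsec T sigma).
have HB0 : 0 <= B by apply: le_trans (normT_ge0 T x1 F1) N1.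
apply/ler_addgt0Pr => r Hr.
set t := B + r / 2.
have HBt : B < t by rewrite /t ltrDl divr_gt0.
have Ht : 0 < t by apply: le_lt_trans HBt.
have HT : forall x, finsupp x -> normT T x <= B -> Theta M (fun i => t^-1 * vT x sigma i).
  move=> x Fx Nx; apply: normM_lt.
    by have [C HC] := vT_fin x Fx; case: (HC M sigma).
  by apply: le_lt_trans HBt; apply: le_trans (normT_ub T x sigma Fx) Nx.
pose xs := fun k : nat => match k with
  | 0 => fun i => t^-1 * vT x1 sigma i
  | 1 => fun i => t^-1 * vT x2 sigma i
  | _ => fun i => t^-1 * vT x3 sigma i end.
pose E := fun k : nat => match k with
  | 0 => iota a1 (b1 - a1).+1
  | 1 => iota a2 (b2 - a2).+1
  | _ => iota a3 (b3 - a3).+1 end.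
pose m := fun k : nat => match k with 0 => a1 | 1 => a2 | _ => a3 end.
have Hxs : forall k, (k < 3)%N -> Theta M (xs k).
  by case=> [|[|[|k]]] _ //=; apply: HT.
have Hadm : admissible M 3 E.
  exists (tilde [:: a1; a2 - a1; a3 - a2]%N); split.
    left; exists [:: a1; a2 - a1; a3 - a2]%N; split => //; right; split => //=.
    rewrite H1 !subn_gt0 /=; apply/andP; split; lia.
  exists m; split; [|split; [|split]].
  - case=> [|[|[|k]]] //= _; [exists 1%N|exists 2%N|exists 3%N]; split => //;
      rewrite ?big_ord_recr big_ord0 /=; lia.
  - by case=> [|[|[|k]]].
  - by case=> [|[|[|k]]] i Hk; rewrite /E /m mem_iota; lia.
  - by case=> [|[|[|k]]] i Hk; rewrite /E /m mem_iota; lia.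
have := Theta_adm M 3 xs E Hxs Hadm => HTs.
have HTsum : Theta M (fun i => (2 * t)^-1 * vT (fun eta => x1 eta + x2 eta + x3 eta) sigma i).
  eapply Theta_ext; first exact: HTs.
  move=> i /=; rewrite !big_ord_recr big_ord0 /= add0r.
  rewrite (in_blk _ _ _ _ _ _ S1) (in_blk _ _ _ _ _ _ S2) (in_blk _ _ _ _ _ _ S3) vT_add.
  by rewrite invfM; ring.
apply: le_trans (normM_le M _ (2 * t) _ HTsum) _.
  by rewrite mulr_gt0.
by rewrite /t; lra.
Qed.

Lemma c00_fin {R : realType} (x : seq bool -> R) : c00T x -> finsupp x.
Proof. by case. Qed.

Lemma c00_lin {R : realType} (x y : seq bool -> R) a b : c00T x -> c00T y ->
  c00T (fun eta => a * x eta + b * y eta).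
Proof.
move=> [Hx0 [s Hs]] [Hy0 [s' Hs']]; split; first by rewrite Hx0 Hy0 !mulr0 addr0.
exists (s ++ s') => eta; rewrite mem_cat negb_or => /andP [H1 H2].
by rewrite Hs // Hs' // !mulr0 addr0.
Qed.

Lemma c00_mask {R : realType} (x : seq bool -> R) (P : pred (seq bool)) : c00T x ->
  c00T (fun eta => if P eta then x eta else 0).
Proof.
move=> [Hx0 [s Hs]]; split; first by rewrite Hx0 if_same.
by exists s => eta H; rewrite Hs // if_same.
Qed.

Lemma c00_0 {R : realType} : c00T (fun _ : seq bool => 0 : R).
Proof. by split => //; exists [::]. Qed.

Lemma c00_z {R : realType} eta : eta != [::] -> c00T (z R eta).
Proof.
move=> H; split; first by rewrite /z eq_sym (negbTE H).
by exists [:: eta] => xi; rewrite inE /z => /negbTE ->.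
Qed.

Lemma lin_comb {R : realType} (f : (seq bool -> R) -> R) x y a b : linear_c00 f -> c00T x -> c00T y ->
  f (fun eta => a * x eta + b * y eta) = a * f x + b * f y.
Proof. by move=> Hf; apply: Hf. Qed.

Lemma lin_ext {R : realType} (f : (seq bool -> R) -> R) (x y : seq bool -> R) :
  (forall eta, x eta = y eta) -> f x = f y.
Proof. by move=> H; congr f; apply: funext. Qed.

Lemma lin_scale {R : realType} (f : (seq bool -> R) -> R) x c : linear_c00 f -> c00T x ->
  f (fun eta => c * x eta) = c * f x.
Proof.
move=> Hf Hx; rewrite -[RHS]addr0 -(mul0r (f x)) -lin_comb //.
by apply: lin_ext => eta; rewrite mul0r addr0.
Qed.

Lemma lin_add {R : realType} (f : (seq bool -> R) -> R) x y : linear_c00 f -> c00T x -> c00T y ->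
  f (fun eta => x eta + y eta) = f x + f y.
Proof.
move=> Hf Hx Hy; rewrite -[f x]mul1r -[f y]mul1r -lin_comb //.
by apply: lin_ext => eta; rewrite !mul1r.
Qed.

Lemma lin_sub {R : realType} (f : (seq bool -> R) -> R) x y : linear_c00 f -> c00T x -> c00T y ->
  f (fun eta => x eta - y eta) = f x - f y.
Proof.
move=> Hf Hx Hy; rewrite -[f x]mul1r -mulN1r -lin_comb //.
by apply: lin_ext => eta; rewrite !mul1r mulN1r.
Qed.

Lemma lin_0 {R : realType} (f : (seq bool -> R) -> R) : linear_c00 f -> f (fun _ => 0) = 0.
Proof.
move=> Hf; have H := @lin_scale R f (fun _ => 0) 0 Hf c00_0.
rewrite (@lin_ext R f _ (fun eta => 0 * (fun _ : seq bool => 0 : R) eta)); last by move=> ?; rewrite mul0r.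
by rewrite H mul0r.
Qed.

Lemma lin_lincomb {R : realType} (f : (seq bool -> R) -> R) F x : linear_c00 f -> c00T x ->
  uniq F -> [::] \notin F ->
  f (lincomb F x) = \sum_(eta <- F) f (z R eta) * x eta.
Proof.
move=> Hf Hx; elim: F => [|a F IH] /=.
  by move=> _ _; rewrite big_nil -(lin_0 _ Hf); apply: lin_ext.
move=> /andP [HaF HU]; rewrite inE negb_or => /andP [Ha HF].
rewrite big_cons -IH //.
have Hl : c00T (lincomb F x).
  case: Hx => [Hx0 [s Hs]]; split; first by rewrite /lincomb Hx0 if_same.
  by exists s => eta H; rewrite /lincomb Hs // if_same.
rewrite [f (z R a) * _]mulrC -[f (lincomb F x)]mul1r -lin_comb //; last first.
  by apply: c00_z; rewrite eq_sym.
apply: lin_ext => eta; rewrite /lincomb /z inE mul1r.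
case: (eqVneq eta a) => [->|Hne] /=; first by rewrite (negbTE HaF) mulr1 addr0.
by rewrite mulr0 add0r.
Qed.

Lemma normM_scale {R : realType} M (v : nat -> R) c : nset M v !=set0 ->
  normM M (fun l => c * v l) <= `|c| * normM M v.
Proof.
move=> Hne.
have H1 : forall s, nset M v s -> normM M (fun l => c * v l) <= `|c| * s.
  move=> s [Hs HT]; apply/ler_addgt0Pr => d Hd.
  have Hp : 0 < `|c| * s + d by rewrite ltr_pwDr // mulr_ge0 // ltW.
  apply: normM_le => //.
  apply: (Theta_scale M _ _ ((`|c| * s + d)^-1 * c * s) HT).
    rewrite !normrM ger0_norm ?invr_ge0 ?(ltW Hp) // (ger0_norm (ltW Hs)).
    rewrite -mulrA ler_pdivrMl // mulr1 lerDl ltW //.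
  move=> l; have Hs0 : s != 0 by rewrite gt_eqF.
  by rewrite -!mulrA (mulrA s) mulfV // mul1r.
case: (eqVneq c 0) => [Hc0|Hc].
  case: Hne => s Hs; apply: le_trans (H1 s Hs) _; by rewrite Hc0 normr0 !mul0r.
have Hc' : 0 < `|c| by rewrite normr_gt0.
rewrite -ler_pdivrMl //; rewrite /normM -/(nset M v); apply: lb_le_inf => // s Hs.
by rewrite ler_pdivrMl //; apply: H1.
Qed.

Lemma normT_scale {R : realType} T (x : seq bool -> R) c : finsupp x ->
  normT T (fun eta => c * x eta) <= `|c| * normT T x.
Proof.
move=> Hx; apply: normT_le => sigma.
have -> : vT (fun eta => c * x eta) sigma = fun l => c * vT x sigma l.
  by apply: funext => l; rewrite /vT; case: eqP; rewrite ?mulr0.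
apply: le_trans (normM_scale _ _ c _) _.
  have [B HB] := vT_fin x Hx; by case: (HB (MT (Tsec T sigma)) sigma).
by apply: ler_wpM2l => //; apply: normT_ub.
Qed.

Lemma pow32 j : (2 ^ j * (j + 2) <= 2 * 3 ^ j)%N.
Proof.
elim: j => // j IH; rewrite !expnS.
apply: (@leq_trans (3 * (2 ^ j * (j + 2)))); first by nia.
by rewrite [X in (_ <= X)%N]mulnCA leq_pmul2l.
Qed.

Definition allseqs (L : nat) : seq (seq bool) :=
  undup (flatten [seq map (@tval k bool) (enum {: k.-tuple bool}) | k <- iota 1 L]).

Lemma mem_allseqs L eta : (eta \in allseqs L) = (0 < size eta <= L)%N.
Proof.
rewrite /allseqs mem_undup; apply/flattenP/idP.
  move=> [s /mapP [k Hk ->] /mapP [t _ ->]]; move: Hk; rewrite mem_iota size_tuple; lia.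
move=> H; exists (map (@tval (size eta) bool) (enum {: (size eta).-tuple bool})).
  apply/mapP; exists (size eta) => //; rewrite mem_iota; lia.
apply/mapP; exists (Tuple (eqxx (size eta))) => //; by rewrite mem_enum.
Qed.

Lemma c00_scale {R : realType} (x : seq bool -> R) c : c00T x -> c00T (fun eta => c * x eta).
Proof.
move=> [Hx0 [s Hs]]; split; first by rewrite Hx0 mulr0.
by exists s => eta H; rewrite Hs // mulr0.
Qed.

Lemma c00_add {R : realType} (x y : seq bool -> R) : c00T x -> c00T y -> c00T (fun eta => x eta + y eta).
Proof.
move=> [Hx0 [s Hs]] [Hy0 [s' Hs']]; split; first by rewrite Hx0 Hy0 addr0.
exists (s ++ s') => eta; rewrite mem_cat negb_or => /andP [H1 H2].
by rewrite Hs // Hs' // addr0.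
Qed.

Lemma part3 {R : realType} T : shrinkingT R T.
Proof.
move=> f Hf [C HC] eps Heps.
case: (pselect (exists L, forall y, c00T y -> (forall eta, y eta != 0 -> (L < size eta)%N) ->
   `|f y| <= eps * normT T y)) => [[L HL]|HnL].
- exists (allseqs L), (fun eta => f (z R eta)); split; first by rewrite mem_allseqs.
  move=> x Hx.
  have HU : uniq (allseqs L) by apply: undup_uniq.
  have H0 : [::] \notin allseqs L by rewrite mem_allseqs.
  rewrite -lin_lincomb //.
  have Hl : c00T (lincomb (allseqs L) x) by apply: (c00_mask x (fun eta => eta \in allseqs L)).
  rewrite -lin_sub //.
  pose y := fun eta => if eta \notin allseqs L then x eta else 0.
  have -> : f (fun eta => x eta - lincomb (allseqs L) x eta) = f y.
    by apply: lin_ext => eta; rewrite /lincomb /y; case: (eta \in _) => /=; rewrite ?subr0 ?subrr.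
  have Hy : c00T y by apply: (c00_mask x (fun eta => eta \notin allseqs L)).
  apply: le_trans (HL y Hy _) _.
    move=> eta; rewrite /y; case: ifP => [Hn Hxe|_]; last by rewrite eqxx.
    case: eta Hn Hxe => [|a eta] Hn Hxe; first by case: Hx => Hx0 _; rewrite Hx0 eqxx in Hxe.
    by move: Hn; rewrite mem_allseqs /=; lia.
  by apply: ler_wpM2l; [apply: ltW|apply: normT_mask; apply: c00_fin].
- exfalso.
  have HB : forall L, exists y, c00T y /\ (forall eta, y eta != 0 -> (L < size eta)%N) /\
      eps * normT T y < `|f y|.
    move=> L; apply: contrapT => Hno; apply: HnL; exists L => y Hy Hs.
    rewrite leNgt; apply/negP => Hlt; apply: Hno; exists y; split => //.
  have HP : forall j L, exists x b, c00T x /\ (L < b)%N /\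
      (forall eta, x eta != 0 -> (L < size eta <= b)%N) /\ normT T x <= 2 ^+ j /\ 3 ^+ j * eps <= f x.
    elim=> [|j IH] L.
    + have [y [Hy [Hs Hlt]]] := HB L.
      have Fy := c00_fin _ Hy; have Hn0 := normT_ge0 T y Fy.
      have Hnp : 0 < normT T y.
        rewrite lt_neqAle Hn0 andbT; apply/eqP => H0.
        have := HC y Hy; rewrite -H0 mulr0 => Hle; move: Hlt; rewrite -H0 mulr0 => Hlt.
        by have := lt_le_trans Hlt Hle; rewrite ltxx.
      pose sg : R := if 0 <= f y then 1 else -1.
      have Hsg : sg * f y = `|f y| by rewrite /sg; case: ifP => H; rewrite ?mul1r ?mulN1r;
        [rewrite ger0_norm|rewrite ler0_norm //; apply: ltW; rewrite ltNge H].
      have Hsg1 : `|sg| = 1 by rewrite /sg; case: ifP; rewrite ?normrN normr1.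
      pose x := fun eta : seq bool => (sg / normT T y) * y eta.
      case: (Fy) => s Hs'.
      exists x, (maxn L.+1 (foldr maxn 0 (map size s))); split; [|split; [|split; [|split]]].
      * exact: c00_scale.
      * by rewrite leq_max ltnSn.
      * move=> eta; rewrite /x; case: (eqVneq (y eta) 0) => [->|Hye]; first by rewrite mulr0 eqxx.
        move=> _; rewrite Hs //= leq_max; apply/orP; right.
        apply: le_size_mem; apply/negPn/negP => Hn; by move: Hye; rewrite Hs' ?eqxx.
      * apply: le_trans (normT_scale T y _ Fy) _.
        rewrite normrM Hsg1 mul1r ger0_norm ?invr_ge0 ?(ltW Hnp) // mulVf ?gt_eqF //.
      * rewrite /x lin_scale // expr0 mul1r -mulrA mulrC -mulrA [_ * sg]mulrC Hsg.
        by rewrite mulrC ler_pdivlMr // ltW.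
    + have [x1 [b1 [Hx1 [Hb1 [Hs1 [Hn1 Hf1]]]]]] := IH L.
      have [x2 [b2 [Hx2 [Hb2 [Hs2 [Hn2 Hf2]]]]]] := IH b1.
      have [x3 [b3 [Hx3 [Hb3 [Hs3 [Hn3 Hf3]]]]]] := IH b2.
      exists (fun eta => x1 eta + x2 eta + x3 eta), b3; split; [|split; [|split; [|split]]].
      * by apply: c00_add => //; apply: c00_add.
      * lia.
      * move=> eta Hne; apply/negPn/negP => Hout; move: Hne.
        have E1 : x1 eta = 0 by apply/eqP/negPn/negP => H; have := Hs1 _ H; move: Hout; lia.
        have E2 : x2 eta = 0 by apply/eqP/negPn/negP => H; have := Hs2 _ H; move: Hout; lia.
        have E3 : x3 eta = 0 by apply/eqP/negPn/negP => H; have := Hs3 _ H; move: Hout; lia.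
        by rewrite E1 E2 E3 !addr0 eqxx.
      * rewrite exprS.
        apply: (three_blocks T x1 x2 x3 L.+1 b1 b1.+1 b2 b2.+1 b3) => //; try apply: c00_fin => //; lia.
      * have := lin_add f (fun eta => x1 eta + x2 eta) x3 Hf (c00_add _ _ Hx1 Hx2) Hx3 => /= ->.
        rewrite lin_add // exprS -mulrA; lra.
  have [y0 [b0 [Hy0 [_ [_ [Hn0 Hf0]]]]]] := HP 0%N 0%N.
  have HC0 : 0 <= C.
    rewrite leNgt; apply/negP => HCn.
    have := HC y0 Hy0; have := normT_ge0 T y0 (c00_fin _ Hy0).
    move: Hf0; rewrite expr0 mul1r => Hf0 Hn Hc.
    have : C * normT T y0 <= 0 by rewrite mulr_le0_ge0 // ltW.
    have : f y0 <= `|f y0| by apply: ler_norm.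
    lra.
  set j := Num.Def.archi_bound (2 * C / eps).
  have Hj : 2 * C / eps < j%:R by apply: archi_boundP; rewrite divr_ge0 // ?mulr_ge0 // ltW.
  have [x [b [Hx [_ [_ [Hn Hfx]]]]]] := HP j 0%N.
  have Hkey : 3 ^+ j * eps <= C * 2 ^+ j.
    apply: le_trans Hfx _; apply: le_trans (ler_norm _) _; apply: le_trans (HC x Hx) _.
    by apply: ler_wpM2l.
  have Hnat := pow32 j; rewrite -(ler_nat R) !natrM natrD !natrX in Hnat.
  have HPp : 0 < (2 : R) ^+ j by apply: exprn_gt0.
  rewrite ltr_pdivrMr // in Hj.
  set P := (2 : R) ^+ j in Hkey Hnat HPp.
  set Q := (3 : R) ^+ j in Hkey Hnat.
  set J := (j%:R : R) in Hj Hnat.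
  have H1 : eps * (P * (J + 2)) <= eps * (2 * Q) by apply: ler_wpM2l => //; apply: ltW.
  have H2 : P * (2 * C) < P * (J * eps) by rewrite ltr_pM2l.
  nra.
Qed.

Theorem lemma5p5 (R : realType) (T : set (seq bool * seq nat)) :
  is_tree2N T ->
  (forall eta : seq bool, eta != [::] -> 0 < normT T (z R eta)) /\
  (forall (A B : seq (seq bool)) (a : seq bool -> R),
      [::] \notin B -> {subset A <= B} ->
      normT T (lincomb A a) <= normT T (lincomb B a)) /\
  shrinkingT R T.
Proof.
move=> _; split; [|split].
- by move=> eta H; apply: part1.
- by move=> A B a _ HAB; apply: part2.
- exact: part3.
Qed.
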